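(* Let $\mathbb{F}$ be a field, $p,q\in\mathbb{F}[t]$ monic of degree $2$, $\mathcal{W}_{p,q}=\mathbb{F}\langle a,b\rangle/(p(a),q(b))$. Let $\gamma\in\mathcal{W}_{p,q}^\times$ and let $x\in(\mathbb{F}[a]\cup\mathbb{F}[b])\setminus\mathbb{F}$ be a nonscalar basic vector. If $\gamma x\gamma^{-1}$ is basic (i.e. lies in $\mathbb{F}[a]\cup\mathbb{F}[b]$), then $\gamma x\gamma^{-1}=x$.
   Context: $\mathcal{W}_{p,q}$ is the quotient of the free associative unital $\mathbb{F}$-algebra on two noncommuting generators by the two-sided ideal generated by $p(a)$ and $q(b)$; $\mathbb{F}[a]$ and $\mathbb{F}[b]$ are $2$-dimensional subalgebras. *)

(* Defs.v *)
From HB Require Import structures.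
From mathcomp Require Import all_boot all_order all_algebra.
Set Implicit Arguments. Unset Strict Implicit. Unset Printing Implicit Defensive.
Import GRing.Theory.
Local Open Scope ring_scope.

Definition peval (F : fieldType) (A : algType F) (r : {poly F}) (x : A) : A :=
  (map_poly (in_alg A) r).[x].

(* (A, a, b) is W_{p,q} = F<a,b>/(p(a), q(b)), characterised (up to unique
   isomorphism) by its universal property among F-algebras. *)
Definition is_Wpq (F : fieldType) (p q : {poly F}) (A : algType F) (a b : A) : Prop :=
  peval p a = 0 /\ peval q b = 0 /\
  forall (B : algType F) (a' b' : B), peval p a' = 0 -> peval q b' = 0 ->
    exists f : {lrmorphism A -> B},
      [/\ f a = a', f b = b' &
          forall g : {lrmorphism A -> B}, g a = a' -> g b = b' -> forall y, g y = f y].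

Definition in_Fx (F : fieldType) (A : algType F) (x y : A) : Prop :=
  exists r : {poly F}, y = peval r x.

Definition is_scalar (F : fieldType) (A : algType F) (y : A) : Prop :=
  exists c : F, y = c%:A.

Definition basic (F : fieldType) (A : algType F) (a b y : A) : Prop :=
  in_Fx a y \/ in_Fx b y.

(* Main.v *)
Require Import Defs.
From HB Require Import structures.
From mathcomp Require Import all_boot all_order all_algebra.
Set Implicit Arguments. Unset Strict Implicit. Unset Printing Implicit Defensive.
Import GRing.Theory.
Local Open Scope ring_scope.

Lemma peval_horner (F : fieldType) (A : algType F) r (u : A) :
  peval r u = horner_alg u r.
Proof. by []. Qed.

Lemma poly_size2 (F : fieldType) (s : {poly F}) : (size s <= 2)%N ->
  s = (s`_0)%:P + s`_1 *: 'X.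
Proof.
move=> hs; apply/polyP => i; rewrite coefD coefC coefZ coefX.
case: i => [|[|i]] /=; rewrite ?mulr1 ?mulr0 ?addr0 ?add0r //.
by rewrite nth_default // (leq_trans hs).
Qed.

Lemma reduce (F : fieldType) (A : algType F) (p : {poly F}) (u : A) r :
  size p = 3%N -> peval p u = 0 ->
  exists d0 d1 : F, peval r u = d0%:A + d1 *: u.
Proof.
move=> sp pu; have p0 : p != 0 by rewrite -size_poly_eq0 sp.
have hs : (size (r %% p)%R <= 2)%N by rewrite -ltnS -sp ltn_modp.
exists ((r %% p)`_0), ((r %% p)`_1).
rewrite peval_horner {1}(divp_eq r p) rmorphD rmorphM /=.
have -> : horner_alg u p = 0 by rewrite -peval_horner.
rewrite mulr0 add0r.
rewrite {1}(poly_size2 hs) rmorphD /= linearZ /= horner_algC horner_algX.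
by rewrite mulr_algl.
Qed.
Lemma in_qpoly_horner (A : comNzRingType) (h : {poly A}) (r : {poly A}) :
  (map_poly (in_alg {poly %/ h}) r).['qX] = in_qpoly h r.
Proof.
elim/poly_ind: r => [|r c IH]; first by rewrite map_poly0 horner0 rmorph0.
rewrite rmorphD rmorphM /= map_polyX map_polyC /= hornerMXaddC IH.
rewrite rmorphD rmorphM /=; congr (_ + _).
by rewrite -alg_polyC in_qpolyZ in_qpoly1.
Qed.

Lemma root_qX (A : comNzRingType) (h : {poly A}) : h \is monic -> (1 < size h)%N ->
  (map_poly (in_alg {poly %/ h}) h).['qX] = 0.
Proof.
move=> hm hs; rewrite in_qpoly_horner; apply/val_inj => /=.
by rewrite /mk_monic hs hm /= Pdiv.RingMonic.rmodpp.
Qed.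

Section Tens.
Context (F : fieldType) (p q : {poly F}).
Local Notation R1 := {poly %/ p}.
Definition QQ : {poly R1} := map_poly (in_alg R1) q.
Local Notation B0 := {poly %/ QQ}.
Definition phi (k : F) : B0 := in_alg B0 (in_alg R1 k).
Definition BF : Type := B0.
HB.instance Definition _ := GRing.ComNzRing.on BF.
Definition scF (k : F) (y : BF) : BF := (phi k : BF) * y.
Fact scF_A a b v : scF a (scF b v) = scF (a * b) v.
Proof. by rewrite /scF /phi mulrA -!rmorphM. Qed.
Fact scF_1 : left_id 1 scF.
Proof. by move=> v; rewrite /scF /phi !rmorph1 mul1r. Qed.
Fact scF_Dr : right_distributive scF +%R.
Proof. by move=> a u v; rewrite /scF mulrDr. Qed.
Fact scF_Dl v : {morph scF^~ v: a b / a + b}.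
Proof. by move=> a b; rewrite /scF /phi !rmorphD mulrDl. Qed.
HB.instance Definition _ := GRing.Zmodule_isLmodule.Build F BF scF_A scF_1 scF_Dr scF_Dl.
Fact scF_Al (a : F) (u v : BF) : a *: (u * v) = (a *: u) * v.
Proof. by rewrite /GRing.scale /= /scF mulrA. Qed.
HB.instance Definition _ := GRing.Lmodule_isLalgebra.Build F BF scF_Al.
Fact scF_Ar (a : F) (u v : BF) : a *: (u * v) = u * (a *: v).
Proof. by rewrite /GRing.scale /= /scF mulrCA. Qed.
HB.instance Definition _ := GRing.Lalgebra_isAlgebra.Build F BF scF_Ar.

Lemma scFE (k : F) (y : BF) : k *: y = (phi k : BF) * y.
Proof. by []. Qed.

Lemma in_algBF k : in_alg BF k = phi k.
Proof. by rewrite /= scFE mulr1. Qed.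


Definition ap : BF := in_alg B0 ('qX : R1).
Definition bp : BF := ('qX : B0).

Lemma map_phi (r : {poly F}) :
  map_poly (in_alg BF) r = map_poly (in_alg B0) (map_poly (in_alg R1) r).
Proof.
rewrite -map_poly_comp; apply: eq_map_poly => k; by rewrite in_algBF.
Qed.

Hypotheses (hp : p \is monic) (hp2 : size p = 3%N) (hq : q \is monic) (hq2 : size q = 3%N).

Lemma ap_root : peval p ap = 0.
Proof.
rewrite /peval map_phi /ap.
have := horner_map (in_alg B0) (map_poly (in_alg R1) p) ('qX : R1).
move=> /= ->; by rewrite root_qX ?hp2 // scale0r.
Qed.

Lemma sizeQQ : size QQ = 3%N.
Proof.
rewrite /QQ size_map_poly_id0 // (monicP hq) rmorph1; exact: oner_neq0.
Qed.

Lemma bp_root : peval q bp = 0.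
Proof.
rewrite /peval map_phi /bp -/QQ root_qX ?sizeQQ //.
exact: monic_map.
Qed.


Lemma valBF_Z (k : F) (z : BF) : polyn (k *: z : BF) = (in_alg R1 k) *: polyn (z : B0).
Proof.
rewrite scFE /phi.
have -> : (in_alg B0 (in_alg R1 k) : BF) * z = ((in_alg R1 k) *: (z : B0) : B0) by exact: (@mulr_algl R1 B0 (in_alg R1 k) (z : B0)).
by [].
Qed.

Lemma valBF_D (y z : BF) : polyn (y + z : BF) = polyn (y : B0) + polyn (z : B0).
Proof. by []. Qed.

Lemma valR1_alg (k : F) : polyn (in_alg R1 k) = k%:P.
Proof. by rewrite /= -alg_polyC scale1r alg_polyC. Qed.


Lemma val1 : polyn (1 : B0) = 1%:P.
Proof. by []. Qed.

Lemma val_qX1 : polyn ('qX : R1) = 'X.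
Proof. by rewrite qpolyXE ?hp2. Qed.

Lemma val_bp : polyn (bp : B0) = 'X.
Proof. by rewrite /bp qpolyXE ?sizeQQ // monic_map. Qed.

Lemma val_ap : polyn (ap : B0) = ('qX : R1)%:P.
Proof. by rewrite /ap /= -mul_polyC polyC1 mulr1. Qed.

Definition kap0 (z : BF) : F := (polyn ((polyn (z : B0))`_0 : R1))`_0.
Definition kapa (z : BF) : F := (polyn ((polyn (z : B0))`_0 : R1))`_1.
Definition kapb (z : BF) : F := (polyn ((polyn (z : B0))`_1 : R1))`_0.

Lemma coords c0 c1 c2 :
  let z : BF := c0%:A + c1 *: ap + c2 *: bp in
  [/\ kap0 z = c0, kapa z = c1 & kapb z = c2].
Proof.
move=> z.
have hz : polyn (z : B0) = (in_alg R1 c0) *: 1%:P + (in_alg R1 c1) *: ('qX : R1)%:P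
   + (in_alg R1 c2) *: 'X.
  by rewrite /z !valBF_D !valBF_Z val1 val_ap val_bp.
have h0 : (polyn (z : B0))`_0 = in_alg R1 c0 + c1 *: ('qX : R1).
  rewrite hz !coefD !coefZ !coefC coefX /= mulr1 mulr0 addr0.
  by rewrite mulr_algl.
have h1 : (polyn (z : B0))`_1 = in_alg R1 c2.
  by rewrite hz !coefD !coefZ !coefC coefX /= mulr1 !mulr0 !add0r.
have v0 : polyn ((polyn (z : B0))`_0 : R1) = c0%:P + c1 *: 'X.
  rewrite h0 (_ : polyn (in_alg R1 c0 + c1 *: ('qX : R1)) = polyn (in_alg R1 c0) + polyn (c1 *: ('qX : R1))) //.
  rewrite poly_of_qpolyZ; congr (_ + _); last by congr (_ *: _); exact: val_qX1.
  by rewrite -mul_polyC ?polyC1 mulr1.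
have v1 : polyn ((polyn (z : B0))`_1 : R1) = c2%:P.
  by rewrite h1 valR1_alg.
rewrite /kap0 /kapa /kapb v0 v1 !coefD !coefZ !coefC !coefX /=.
by rewrite mulr0 mulr1 addr0 add0r.
Qed.

End Tens.

Lemma coords_inj (F : fieldType) (p q : {poly F}) (hp : p \is monic) (hp2 : size p = 3%N)
  (hq : q \is monic) (hq2 : size q = 3%N) c0 c1 c2 e0 e1 e2 :
  c0%:A + c1 *: ap p q + c2 *: bp p q = e0%:A + e1 *: ap p q + e2 *: bp p q :> BF p q ->
  [/\ c0 = e0, c1 = e1 & c2 = e2].
Proof.
move=> E.
have [h0 h1 h2] := coords hp hp2 hq hq2 c0 c1 c2.
have [k0 k1 k2] := coords hp hp2 hq hq2 e0 e1 e2.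
by move: h0 h1 h2; rewrite /= E k0 k1 k2.
Qed.

Theorem mainTheorem14 (F : fieldType) (p q : {poly F})
  (hp : p \is monic) (hp2 : size p = 3%N) (hq : q \is monic) (hq2 : size q = 3%N)
  (A : algType F) (a b : A) (hW : @is_Wpq F p q A a b)
  (gamma gamma' : A) (hg1 : gamma * gamma' = 1) (hg2 : gamma' * gamma = 1)
  (x : A) (hx : basic a b x) (hxns : ~ is_scalar x)
  (hconj : basic a b (gamma * x * gamma')) :
  gamma * x * gamma' = x.
Proof.
case: hW => pa [qb univ].
have [f [fa fb _]] := univ _ _ _ (ap_root q hp hp2) (bp_root p hq hq2).
have fxy : f (gamma * x * gamma') = f x.
  by rewrite !rmorphM /= mulrAC -rmorphM hg1 rmorph1 mul1r.
have redu : forall y, basic a b y -> exists d0 d1 : F,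
   (y = d0%:A + d1 *: a /\ f y = d0%:A + d1 *: ap p q + 0 *: bp p q) \/
   (y = d0%:A + d1 *: b /\ f y = d0%:A + 0 *: ap p q + d1 *: bp p q).
  move=> y [] [r ->].
    have [d0 [d1 E]] := reduce r hp2 pa.
    exists d0, d1; left; split => //.
    rewrite E rmorphD /= !(linearZ_LR f) rmorph1 scale0r addr0; congr (_ + _ *: _); exact: fa.
  have [d0 [d1 E]] := reduce r hq2 qb.
  exists d0, d1; right; split => //.
  rewrite E rmorphD /= !(linearZ_LR f) rmorph1 scale0r addr0; congr (_ + _ *: _); exact: fb.
have [d0 [d1 [[Ex Fx]|[Ex Fx]]]] := redu x hx;
have [e0 [e1 [[Ey Fy]|[Ey Fy]]]] := redu _ hconj;
  move: fxy; rewrite Fx Fy => /(coords_inj hp hp2 hq hq2) [E0 E1 E2];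
  rewrite Ey Ex; subst => //.
- by exfalso; apply: hxns; rewrite scale0r addr0; eexists.
- by exfalso; apply: hxns; rewrite scale0r addr0; eexists.
Qed.
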